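(* Let $K\subset\mathbb{C}$ be a finite Galois extension of $\mathbb{Q}$ of degree $n$, with Galois group $G=\{\sigma_1,\dots,\sigma_n\}$, ring of integers $O_K$ and discriminant $D_K$. Let $\beta\in O_K$ be such that $(\sigma_1(\beta),\dots,\sigma_n(\beta))$ is a $\mathbb{Q}$-basis of $K$. Then $|\sigma_1(\beta)|^2+\cdots+|\sigma_n(\beta)|^2\geqslant|D_K|^{1/n}$. *)

(* Defs.v *)
From HB Require Import structures.
From mathcomp Require Import all_boot all_order all_algebra all_field.
Set Implicit Arguments. Unset Strict Implicit. Unset Printing Implicit Defensive.
Import Order.TTheory GRing.Theory Num.Theory.
Local Open Scope ring_scope.

Definition integral_over_Z (L : fieldExtType rat) (x : L) : Prop :=
  exists p : {poly int}, p \is monic /\ root (map_poly (fun z : int => z%:~R) p) x.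

(* w is an integral basis of the ring of integers O_K of K = L:
   its entries lie in O_K, are Q-linearly independent (hence Z-independent),
   and every element of O_K is a Z-linear combination of them. *)
Definition integral_basis (L : fieldExtType rat) (w : seq L) : Prop :=
  [/\ forall x, x \in w -> integral_over_Z x,
      free w &
      forall x : L, integral_over_Z x ->
        exists c : 'I_(size w) -> int, x = \sum_(i < size w) (c i)%:~R * w`_i].

Definition disc_of_basis (L : splittingFieldType rat) (w : seq L) : L :=
  \det (\matrix_(i < size w, j < size w) galTrace 1%VS fullv (w`_i * w`_j)).

(* Main.v *)
Require Import Defs.
From HB Require Import structures.
From mathcomp Require Import all_boot all_order all_algebra all_field.
Import Order.TTheory GRing.Theory Num.Theory.
Local Open Scope ring_scope.
From mathcomp Require Import all_fingroup.

Lemma gal_integral (L : splittingFieldType rat) (s : gal_of {:L}) (x : L) :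
  integral_over_Z x -> integral_over_Z (s x).
Proof.
case=> p [pm px]; exists p; split=> //.
have -> : map_poly (fun z : int => z%:~R) p = map_poly s (map_poly (fun z : int => z%:~R) p).
  rewrite -map_poly_comp; apply: eq_map_poly => z /=; by rewrite rmorph_int.
by rewrite /root horner_map (eqP px) rmorph0.
Qed.

Lemma hadamard_AGM n (B : 'M[algC]_n) : (0 < n)%N ->
  n.-root (`|\det B| ^+ 2) <= (\sum_i \sum_k `|B i k| ^+ 2) / n%:R.
Proof.
move=> n0.
pose Bs := map_mx Num.conj (B^T).
pose M := B *m Bs.
have MsE : map_mx Num.conj (M^T) = M.
  apply/matrixP=> i j; rewrite !mxE rmorph_sum; apply: eq_bigr => k _.
  by rewrite !mxE rmorphM /= conjCK mulrC.
have Mn : M \is normalmx.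
  by rewrite qualifE /= MsE.
pose P := spectralmx M; pose d := spectral_diag M.
have PU : P \is unitarymx := spectral_unitarymx M.
have Pu : P \in unitmx := unitarymx_unit PU.
have ME : M = invmx P *m diag_mx d *m P := orthomx_spectralP Mn.
have detM : \det M = \prod_i d 0 i.
  rewrite ME !det_mulmx det_diag mulrC mulrA -det_mulmx mulmxV // det1 mul1r.
  done.
have trM : \tr M = \sum_i d 0 i.
  by rewrite ME mxtrace_mulC mulmxA mulmxV // mul1mx mxtrace_diag.
have dE : diag_mx d = (P *m B) *m map_mx Num.conj ((P *m B)^T).
  rewrite trmx_mul map_mxM -mulmxA (mulmxA B) -/Bs -/M.
  rewrite -(invmx_unitary PU) ME !mulmxA mulmxV // mul1mx -mulmxA mulmxV //.
  by rewrite mulmx1.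
have d_ge0 i : 0 <= d 0 i.
  have := congr1 (fun X : 'M[algC]_n => X i i) dE; rewrite /= mxE eqxx mulr1n => ->.
  rewrite mxE; apply: sumr_ge0 => k _; rewrite !mxE -normCK.
  exact: exprn_ge0.
have detB : `|\det B| ^+ 2 = \prod_i d 0 i.
  rewrite normCK -detM /M det_mulmx /Bs det_map_mx det_tr.
  done.
have trE : \tr M = \sum_i \sum_k `|B i k| ^+ 2.
  rewrite /mxtrace; apply: eq_bigr => i _; rewrite mxE; apply: eq_bigr => k _.
  by rewrite !mxE normCK.
rewrite detB -trE trM.
have := leif_rootC_AGM (A := predT) (E := fun i : 'I_n => d 0 i) (fun i _ => d_ge0 i).
rewrite card_ord => /leifP; case: ifP => _; [move=> /eqP -> | move=> /ltW].
  by [].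
done.
Qed.

Lemma core (L : splittingFieldType rat) (iota : {rmorphism L -> algC})
  (beta : L) n (w : 'I_n -> L) (c : gal_of {:L} -> 'I_n -> int) :
  n = #|'Gal({:L} / 1%VS)%g| ->
  (forall s : gal_of {:L}, s beta = \sum_(j < n) (c s j)%:~R * w j) ->
  free [seq (s : gal_of {:L}) beta | s <- enum 'Gal({:L} / 1%VS)%g] ->
  n.-root `|iota (\det (\matrix_(i < n, j < n) galTrace 1%VS fullv (w i * w j)))|
    <= \sum_(s in 'Gal({:L} / 1%VS)%g) `|iota (s beta)| ^+ 2.
Proof.
set G := 'Gal({:L} / 1%VS)%g.
move=> Hn; subst n => Hc Hfree.
set N := #|G|.
pose g (i : 'I_N) : gal_of {:L} := enum_val i.
pose A := \matrix_(i < N, j < N) iota (g i (w j)).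
pose Cm := \matrix_(k < N, j < N) c (g k) j.
pose B := \matrix_(i < N, k < N) iota (g i (g k beta)).
have detT : iota (\det (\matrix_(i < N, j < N) galTrace 1%VS fullv (w i * w j)))
    = \det A ^+ 2.
  rewrite -det_map_mx.
  have -> : map_mx iota (\matrix_(i < N, j < N) galTrace 1%VS fullv (w i * w j))
      = A^T *m A.
    apply/matrixP=> j l; rewrite !mxE /galTrace rmorph_sum big_enum_val.
    by apply: eq_bigr => i _; rewrite !mxE !rmorphM.
  by rewrite det_mulmx det_tr expr2.
have BE : B = A *m (map_mx (intr : int -> algC) Cm)^T.
  apply/matrixP=> i k; rewrite !mxE Hc !rmorph_sum; apply: eq_bigr => j _.
  by rewrite !mxE !rmorphM !rmorph_int mulrC.
have detC : \det Cm != 0.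
  apply/negP => /eqP dC.
  have : \det (map_mx (intr : int -> rat) Cm) == 0 by rewrite det_map_mx dC.
  case/det0P => v vN0 vC.
  have Hf : free (map_tuple (fun s : gal_of {:L} => s beta) (enum_tuple G)) by [].
  move: Hf.
  move/freeP/(_ (fun k => v 0 k)) => H.
  case/eqP: vN0; apply/rowP => k; rewrite mxE; apply: H.
  have -> : \sum_(i < N) v 0 i *: (map_tuple (fun s : gal_of {:L} => s beta) (enum_tuple G))`_i
      = \sum_(i < N) v 0 i *: g i beta.
    apply: eq_bigr => i _; congr (_ *: _).
    rewrite /= (nth_map 1%g); first by rewrite /g (enum_val_nth (1 : gal_of {:L})%g).
    by rewrite -cardE ltn_ord.
  under eq_bigr => i _ do rewrite Hc scaler_sumr.
  rewrite exchange_big /=; apply: big1 => j _.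
  have := congr1 (fun X : 'rV[rat]_N => X 0 j) vC; rewrite !mxE => vCj.
  rewrite -[RHS](scale0r (w j)) -vCj scaler_suml; apply: eq_bigr => i _.
  rewrite !mxE -scalerA; congr (_ *: _).
  by rewrite -(rmorph_int (in_alg L)) /= mulr_algl.
set S := \sum_(s in G) `|iota (s beta)| ^+ 2.
have rowS i : \sum_k `|B i k| ^+ 2 = S.
  rewrite /S (reindex_astabs 'R%act (g i)) /=; last by rewrite astabsR enum_valP.
  rewrite [RHS]big_enum_val; apply: eq_bigr => k _; rewrite mxE galM ?memvf //.
have trB : \sum_i \sum_k `|B i k| ^+ 2 = N%:R * S.
  under eq_bigr => i _ do rewrite rowS.
  by rewrite sumr_const card_ord mulr_natl.
have N0 : (0 < N)%N by apply/card_gt0P; exists 1%g; exact: group1.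
rewrite detT normrX.
have h1 : N.-root (`|\det A| ^+ 2) <= N.-root (`|\det B| ^+ 2).
  rewrite ler_rootC // ?qualifE /= ?exprn_ge0 //.
  rewrite BE det_mulmx det_tr det_map_mx normrM exprMn ler_peMr ?exprn_ge0 //.
  by rewrite exprn_ege1 // -intr_norm ler1z -gtz0_ge1 normr_gt0.
apply: (le_trans h1); apply: (le_trans (hadamard_AGM _ B N0)).
by rewrite trB mulrC mulKf // pnatr_eq0 -lt0n N0.
Qed.

Theorem proposition2 (L : splittingFieldType rat) (iota : {rmorphism L -> algC})
  (beta : L) (w : seq L) :
  galois 1%VS {:L} ->
  integral_over_Z beta ->
  basis_of {:L} [seq (s : gal_of {:L}) beta | s <- enum 'Gal({:L} / 1%VS)%g] ->
  integral_basis w ->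
  (\dim {:L}).-root `|iota (disc_of_basis w)|
    <= \sum_(s in 'Gal({:L} / 1%VS)%g) `|iota (s beta)| ^+ 2.
Proof.
move=> galL intb basb [_ freew spanw].
have HN : \dim {:L} = #|'Gal({:L} / 1%VS)%g|.
  by have := galois_dim galL; rewrite dimv1 divn1.
have [c Hc] : exists c : forall s : gal_of {:L}, 'I_(size w) -> int,
    forall s : gal_of {:L}, s beta = \sum_(j < size w) (c s j)%:~R * w`_j.
  have H (s : gal_of {:L}) : exists c : 'I_(size w) -> int,
      s beta = \sum_(j < size w) (c j)%:~R * w`_j.
    by apply: spanw; apply: gal_integral.
  exact: (fin_all_exists H).
have Hw : size w = #|'Gal({:L} / 1%VS)%g|.
  have sub : ({:L} <= <<w>>)%VS.
    move: basb => /andP[/eqP <- _]; apply/span_subvP => x /mapP [s _ ->].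
    rewrite Hc; apply: memv_suml => j _.
    rewrite -(rmorph_int (in_alg L)) /= mulr_algl; apply: memvZ.
    by apply: memv_span; apply: mem_nth.
  rewrite -HN -(eqP freew); apply/eqP; rewrite eqn_leq.
  by rewrite !dimvS ?subvf.
rewrite HN /disc_of_basis -Hw.
apply: (@core L iota beta (size w) (fun j => w`_j) c Hw Hc).
by case/andP: basb.
Qed.
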